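(* Let $p$ be a prime and let $(\mathbb{K},|\cdot|_{\mathbb{K}})$ be a valued field with $\mathbb{Q}_p\subseteq\mathbb{K}$ such that the inclusion $\mathbb{Q}_p\hookrightarrow\mathbb{K}$ is continuous. Let $f:\mathbb{Q}_p\to\mathbb{K}$ be continuous and $n\ge 0$. Then $\Delta_h^{n+1}f(x)=0$ for all $x,h\in\mathbb{Q}_p$ if and only if there are constants $a_0,\dots,a_n\in\mathbb{K}$ with $f(x)=a_0+a_1x+\cdots+a_nx^n$ for all $x\in\mathbb{Q}_p$.
   Context: $\mathbb{Q}_p$ is the field of $p$-adic numbers with its usual $p$-adic absolute value topology. $\Delta_h^{m}f(x)=\sum_{k=0}^{m}\binom{m}{k}(-1)^{m-k}f(x+kh)$. *)

(* Defs.v *)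
From Stdlib Require Import Reals.
From HB Require Import structures.
From mathcomp Require Import all_boot all_order all_algebra.
Set Implicit Arguments. Unset Strict Implicit. Unset Printing Implicit Defensive.
Import Order.TTheory GRing.Theory Num.Theory.
Local Open Scope ring_scope.

Definition is_absval (F : fieldType) (v : F -> R) : Prop :=
  (forall x, Rle R0 (v x)) /\
  (forall x, v x = R0 <-> x = 0) /\
  (forall x y, v (x * y) = Rmult (v x) (v y)) /\
  (forall x y, Rle (v (x + y)) (Rplus (v x) (v y))).

Definition av_continuous (F1 F2 : fieldType) (v1 : F1 -> R) (v2 : F2 -> R)
  (g : F1 -> F2) : Prop :=
  forall x (eps : R), Rlt R0 eps -> exists delta : R, Rlt R0 delta /\
    forall y, Rlt (v1 (y - x)) delta -> Rlt (v2 (g y - g x)) eps.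

(* The p-adic absolute value on Q: |q|_p = p^(-v_p(q)), |0|_p = 0. *)
Definition padic_abs (p : nat) (q : rat) : R :=
  if q == 0 then R0
  else powerRZ (INR p)
    (Z.opp (Z.sub (Z.of_nat (logn p `|numq q|%N))
                  (Z.of_nat (logn p `|denq q|%N)))).

(* (Qp, vp) is a model of the field of p-adic numbers with its p-adic
   absolute value: a field with an absolute value which extends the p-adic
   absolute value on Q (via the canonical map ratr : rat -> Qp), in which Q
   is dense, and which is complete.  This characterizes Q_p up to unique
   isometric isomorphism (Q_p is the completion of (Q, |.|_p)). *)
Definition is_Qp (p : nat) (Qp : fieldType) (vp : Qp -> R) : Prop :=
  is_absval vp /\
  (forall q : rat, vp (ratr q) = padic_abs p q) /\
  (forall (x : Qp) (eps : R), Rlt R0 eps ->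
     exists q : rat, Rlt (vp (x - ratr q)) eps) /\
  (forall u : nat -> Qp,
     (forall eps : R, Rlt R0 eps -> exists N : nat,
        forall m k : nat, (N <= m)%N -> (N <= k)%N -> Rlt (vp (u m - u k)) eps) ->
     exists l : Qp, forall eps : R, Rlt R0 eps -> exists N : nat,
        forall m : nat, (N <= m)%N -> Rlt (vp (u m - l)) eps).

Definition fdiff (A : zmodType) (B : ringType) (m : nat) (h : A) (f : A -> B)
  (x : A) : B :=
  \sum_(k < m.+1) ('C(m, k)%:R * (-1) ^+ (m - k) * f (x + h *+ k)).

(* Main.v *)
Require Import Defs.
From Stdlib Require Import Reals.
From HB Require Import structures.
From mathcomp Require Import all_boot all_order all_algebra.
Import GRing.Theory.
From Stdlib Require Import Lra.
Open Scope R_scope.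
Lemma Rhalf eps : 0 < eps -> 0 < eps / 2 /\ eps / 2 + eps / 2 = eps.
Proof. intros; split; lra. Qed.

Lemma Rmul_choice A B eps : 0 <= A -> 0 <= B -> 0 < eps ->
  exists e, 0 < e /\ e <= 1 /\ (A + 1) * e + e * B <= eps.
Proof.
intros HA HB He.
exists (Rmin 1 (eps / (A + B + 1))).
assert (H0 : 0 < eps / (A + B + 1)) by (apply Rdiv_lt_0_compat; lra).
split; [apply Rmin_pos; lra|split; [apply Rmin_l|]].
replace ((A + 1) * Rmin 1 (eps / (A + B + 1)) + Rmin 1 (eps / (A + B + 1)) * B)
  with (Rmin 1 (eps / (A + B + 1)) * (A + B + 1)) by ring.
apply Rle_trans with ((eps / (A + B + 1)) * (A + B + 1)).
  apply Rmult_le_compat_r; [lra|apply Rmin_r].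
right; field; lra.
Qed.

Lemma Rmul_bound a' db da A B e eps : 0 <= a' -> 0 <= db -> 0 <= da -> 0 <= A -> 0 <= B ->
  a' <= A + da -> da < e -> db < e -> e <= 1 -> (A + 1) * e + e * B <= eps ->
  a' * db + da * B < eps.
Proof.
intros. assert (a' < A + 1) by lra.
assert (a' * db <= (A+1) * db) by (apply Rmult_le_compat_r; lra).
assert ((A+1) * db < (A+1) * e) by (apply Rmult_lt_compat_l; lra).
assert (da * B <= e * B) by (apply Rmult_le_compat_r; lra).
lra.
Qed.
Close Scope R_scope.
Arguments Rhalf {eps}. Arguments Rmul_choice {A B eps}. Arguments Rmul_bound {a' db da A B e eps}.
From mathcomp Require Import zify ring.
Local Open Scope ring_scope.

Import GRing.Theory.
Local Open Scope ring_scope.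

Section Vander.
Variable F : fieldType.

Lemma vander_unit (m : nat) (x : 'I_m -> F) : injective x ->
  Vandermonde m (\row_j x j) \in unitmx.
Proof.
move=> inj; rewrite unitmxE det_Vandermonde unitfE.
apply/prodf_neq0 => i _; apply/prodf_neq0 => j lt; rewrite !mxE subr_eq0.
apply/eqP => /inj eij; by rewrite eij ltnn in lt.
Qed.

Lemma vander_row (m : nat) (x : 'I_m -> F) (c : 'I_m -> F) j :
  ((\row_i c i) *m Vandermonde m (\row_j x j)) 0 j = \sum_(i < m) c i * x j ^+ i.
Proof. by rewrite !mxE; apply: eq_bigr => i _; rewrite !mxE. Qed.

Lemma interp (m : nat) (x : 'I_m -> F) (y : 'I_m -> F) : injective x ->
  exists c : 'I_m -> F, forall j, \sum_(i < m) c i * x j ^+ i = y j.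
Proof.
move=> inj; set V := Vandermonde m (\row_j x j).
pose C := (\row_j y j) *m invmx V.
exists (fun i => C 0 i) => j.
rewrite -vander_row.
have -> : (\row_i C 0 i) = C by apply/rowP => i; rewrite mxE.
rewrite /C -mulmxA mulVmx ?vander_unit // mulmx1 mxE //.
Qed.

Lemma uniq_interp (m : nat) (x : 'I_m -> F) (c : 'I_m -> F) : injective x ->
  (forall j, \sum_(i < m) c i * x j ^+ i = 0) -> forall i, c i = 0.
Proof.
move=> inj H i; set V := Vandermonde m (\row_j x j).
have H0 : (\row_i c i) *m V = 0 by apply/rowP => j; rewrite vander_row H mxE.
have : (\row_i c i) = 0 by rewrite -(mulmxK (@vander_unit m x inj) (\row_i c i : 'rV_m)) -/V H0 mul0mx.
by move/rowP/(_ i); rewrite !mxE.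
Qed.
End Vander.
Lemma fdiffS (A : zmodType) (B : ringType) m (h : A) (f : A -> B) x :
  fdiff m.+1 h f x = fdiff m h f (x + h) - fdiff m h f x.
Proof.
rewrite /fdiff big_ord_recl /=.
have E : forall k : 'I_m.+1, 'C(m.+1, (lift ord0 k)) = ('C(m, k.+1) + 'C(m, k))%N.
  by move=> k; rewrite /= binS.
under eq_bigr do rewrite E natrD !mulrDl.
rewrite big_split /= [X in _ + X]addrC addrCA; congr (_ + _).
  by apply: eq_bigr => k _; rewrite /bump /= add1n subSS mulrS addrA.
rewrite big_ord_recr /= (bin_small (ltnSn m)) !mul0r addr0.
rewrite [in RHS]big_ord_recl /= opprD bin0 subn0 addr0 -sumrN.
congr (_ + _).
  by rewrite bin0 subn0 mulr0n addr0 exprS mulN1r !mul1r mulNr.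
apply: eq_bigr => k _; rewrite /bump /= add1n subSS.
have -> : (m - k = (m - k.+1).+1)%N by rewrite subnSK.
by rewrite exprS !mulN1r mulrN mulNr.
Qed.

Lemma fdiff_ext (A : zmodType) (B : ringType) m (h : A) (f g : A -> B) x :
  (forall y, f y = g y) -> fdiff m h f x = fdiff m h g x.
Proof. by move=> E; apply: eq_bigr => k _; rewrite E. Qed.

Lemma fdiff_shift (A : zmodType) (B : ringType) m (h : A) (f : A -> B) x :
  fdiff m h f (x + h) = fdiff m h (fun y => f (y + h)) x.
Proof. by apply: eq_bigr => k _; rewrite addrAC. Qed.

Lemma fdiff_sub (A : zmodType) (B : ringType) m (h : A) (f g : A -> B) x :
  fdiff m h (fun y => f y - g y) x = fdiff m h f x - fdiff m h g x.
Proof. by rewrite /fdiff -sumrB; apply: eq_bigr => k _; rewrite mulrBr. Qed.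

Lemma fdiff_lin (A : zmodType) (B : comRingType) m (h : A) L (c : 'I_L -> B)
  (f : 'I_L -> A -> B) x :
  fdiff m h (fun y => \sum_(l < L) c l * f l y) x = \sum_(l < L) c l * fdiff m h (f l) x.
Proof.
rewrite /fdiff; under eq_bigr do rewrite mulr_sumr.
rewrite exchange_big; apply: eq_bigr => l _; rewrite mulr_sumr.
by apply: eq_bigr => k _; rewrite mulrCA.
Qed.

Lemma fdiff_pow (R : comRingType) m : forall i, (i < m)%N -> forall a b : R,
  fdiff m b (fun y => y ^+ i) a = 0.
Proof.
elim: m => [//|m IH] i lim a b.
rewrite fdiffS fdiff_shift -fdiff_sub.
rewrite (@fdiff_ext _ _ _ _ _ (fun y => \sum_(l < i) (b ^+ (i - l) *+ 'C(i, l)) * y ^+ l)).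
  rewrite fdiff_lin big1 // => l _; rewrite IH ?mulr0 //.
  exact: leq_trans (ltn_ord l) _.
move=> y; rewrite [y + b]addrC exprDn big_ord_recr /= subnn expr0 mul1r binn mulr1n addrK.
by apply: eq_bigr => l _; rewrite mulrnAl.
Qed.

Lemma fdiff_poly (R : comRingType) n (c : 'I_n.+1 -> R) (a b : R) :
  fdiff n.+1 b (fun y => \sum_(i < n.+1) c i * y ^+ i) a = 0.
Proof. by rewrite fdiff_lin big1 // => i _; rewrite fdiff_pow ?mulr0. Qed.
Lemma rec_zero (B : ringType) m (u : nat -> B) :
  (forall k, \sum_(j < m.+1) 'C(m, j)%:R * (-1) ^+ (m - j) * u (k + j)%N = 0) ->
  (forall k, (k < m)%N -> u k = 0) -> forall k, u k = 0.
Proof.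
move=> R Z k; elim/ltn_ind: k => k IH.
case: (ltnP k m) => [/Z //|le].
have := R (k - m)%N; rewrite big_ord_recr /= big1.
  by rewrite add0r binn subnn expr0 mulr1 mul1r subnK.
move=> j _; rewrite IH ?mulr0 //.
have := ltn_ord j; lia.
Qed.

Lemma seq_zero (A : zmodType) (B : ringType) m (h : A) (f : A -> B) x0 :
  (forall x, fdiff m h f x = 0) ->
  (forall k, (k < m)%N -> f (x0 + h *+ k) = 0) -> forall k, f (x0 + h *+ k) = 0.
Proof.
move=> D Z; apply: (@rec_zero _ m) => // k.
rewrite -[RHS](D (x0 + h *+ k)); apply: eq_bigr => j _.
by rewrite mulrnDr addrA.
Qed.

Lemma nat_inj (K : fieldType) : (forall k, (k.+1%:R : K) != 0) ->
  forall i j : nat, (i%:R : K) = j%:R -> i = j.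
Proof.
move=> H i j E.
case: (ltngtP i j) => // lt.
  have := H (j - i).-1; rewrite prednK ?subn_gt0 //.
  by rewrite (natrB K (ltnW lt)) E subrr eqxx.
have := H (i - j).-1; rewrite prednK ?subn_gt0 //.
by rewrite (natrB K (ltnW lt)) E subrr eqxx.
Qed.

Lemma gridC (Qp K : fieldType) (chQ : forall k, (k.+1%:R : Qp) != 0)
  (chK : forall k, (k.+1%:R : K) != 0) n (phi : Qp -> K) :
  (forall x h, fdiff n.+1 h phi x = 0) ->
  (forall j, (j < n.+1)%N -> phi j%:R = 0) ->
  forall M k, phi ((M.+1%:R)^-1 *+ k) = 0.
Proof.
move=> D Z M.
have Zn : forall k, phi k%:R = 0.
  move=> k; have := @seq_zero _ _ n.+1 1 phi 0 (D ^~ 1).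
  move=> /(_ _ k); rewrite add0r; apply=> j lj; by rewrite add0r Z.
set h := (M.+1%:R : Qp)^-1.
pose u k := phi (h *+ k).
have injx : injective (fun j : 'I_n.+1 => ((j : nat)%:R : K)).
  by move=> i j /(@nat_inj _ chK) /val_inj.
have [d Hd] := @interp _ _ _ (fun j => u j) injx.
pose P (y : K) := \sum_(i < n.+1) d i * y ^+ i.
have Hu : forall k, u k = P k%:R.
  move=> k; apply/eqP; rewrite -subr_eq0; apply/eqP; move: k.
  apply: (@rec_zero _ n.+1).
    move=> k; under eq_bigr do rewrite mulrBr.
    rewrite sumrB.
    have -> : \sum_(i < n.+2) 'C(n.+1, i)%:R * (-1) ^+ (n.+1 - i) * u (k + i)%N
       = fdiff n.+1 h phi (h *+ k).
      by apply: eq_bigr => j _; rewrite /u mulrnDr.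
    have -> : \sum_(i < n.+2) 'C(n.+1, i)%:R * (-1) ^+ (n.+1 - i) * P (k + i)%N%:R
       = fdiff n.+1 1 P k%:R.
      by apply: eq_bigr => j _; rewrite natrD.
    by rewrite D fdiff_poly subrr.
  by move=> k lk; rewrite -(Hd (Ordinal lk)) /= subrr.
have injy : injective (fun j : 'I_n.+1 => ((M.+1 * j)%N%:R : K)).
  by move=> i j /(@nat_inj _ chK) /eqP; rewrite eqn_mul2l /= => /eqP /val_inj.
have hM : h *+ M.+1 = 1 by rewrite -mulr_natr mulVf.
have d0 : forall i, d i = 0.
  apply: (@uniq_interp _ _ _ _ injy) => j.
  rewrite -/(P _) -Hu /u mulrnA hM; exact: Zn.
move=> k; rewrite -/(u k) Hu /P big1 // => i _; by rewrite d0 mul0r.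
Qed.

Lemma zeroQ (Qp K : fieldType) (chQ : forall k, (k.+1%:R : Qp) != 0)
  (chK : forall k, (k.+1%:R : K) != 0) n (g : Qp -> K) :
  (forall x h, fdiff n.+1 h g x = 0) ->
  (forall j, (j < n.+1)%N -> g j%:R = 0) ->
  forall q : rat, g (ratr q) = 0.
Proof.
move=> D Z.
have Zneg : forall j, g (- j%:R) = 0.
  move=> j; have := @seq_zero _ _ n.+1 (-1) g n%:R (D ^~ (-1)).
  move=> /(_ _ (n + j)%N); rewrite mulNrn natrD opprD addrA subrr add0r; apply.
  move=> k lk; rewrite mulNrn -natrB; last by rewrite -ltnS.
  by apply: Z; rewrite ltnS leq_subr.
pose g' := fun x => g (- x).
have D' : forall x h, fdiff n.+1 h g' x = 0.
  move=> x h; rewrite -(D (- x) (- h)); apply: eq_bigr => k _.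
  by rewrite /g' opprD mulNrn.
have Z' : forall j, (j < n.+1)%N -> g' j%:R = 0 by move=> j _; exact: Zneg.
have G := @gridC _ _ chQ chK _ _ D Z.
have G' := @gridC _ _ chQ chK _ _ D' Z'.
move=> q; rewrite /ratr.
have := denq_gt0 q; move: (numq q) (denq q) => a [[|M]|d] //= _.
case: a => a.
  have -> : (Posz a)%:~R / (Posz M.+1)%:~R = (M.+1%:R : Qp)^-1 *+ a.
    by rewrite mulrC mulr_natr.
  exact: G.
have -> : (Negz a)%:~R / (Posz M.+1)%:~R = - ((M.+1%:R : Qp)^-1 *+ a.+1).
  by rewrite NegzE mulrNz mulNr mulrC mulr_natr.
exact: (G' M a.+1).
Qed.
Section AV.
Variables (K : fieldType) (vK : K -> R) (hK : is_absval vK).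

Lemma av0 : vK 0 = R0.
Proof. by case: hK => _ [H _]; apply/H. Qed.

Lemma av_ge0 x : Rle R0 (vK x).
Proof. by case: hK. Qed.

Lemma av1 : vK 1 = R1.
Proof.
case: hK => _ [H [M _]].
have h1 : vK 1 <> R0 by move/H/eqP; rewrite oner_eq0.
have := M 1 1; rewrite mulr1 => E.
have := Rmult_eq_reg_l (vK 1) R1 (vK 1); rewrite Rmult_1_r => E'.
by symmetry; apply: E'.
Qed.

Lemma avN x : vK (- x) = vK x.
Proof.
case: hK => P [H [M _]].
have Em : vK (-1) = R1.
  have := M (-1) (-1); rewrite mulrNN mulr1 av1 => E.
  have := P (-1); move: E; nra.
by rewrite -mulN1r M Em Rmult_1_l.
Qed.

Lemma avD x y : Rle (vK (x + y)) (Rplus (vK x) (vK y)).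
Proof. by case: hK => _ [_ [_ T]]. Qed.

Lemma avM x y : vK (x * y) = Rmult (vK x) (vK y).
Proof. by case: hK => _ [_ [M _]]. Qed.

Lemma avB x y z : Rle (vK (x - z)) (Rplus (vK (x - y)) (vK (y - z))).
Proof. by have := avD (x - y) (y - z); rewrite addrA subrK. Qed.
End AV.

Section Cont.
Variables (Qp K : fieldType) (vp : Qp -> R) (vK : K -> R) (hK : is_absval vK).

Definition contat (phi : Qp -> K) x := forall eps, Rlt R0 eps -> exists delta,
  Rlt R0 delta /\ forall y, Rlt (vp (y - x)) delta -> Rlt (vK (phi y - phi x)) eps.

Lemma cont_const c x : contat (fun _ => c) x.
Proof.
move=> eps he; exists R1; split; first lra.
by move=> y _; rewrite subrr (@av0 _ _ hK).
Qed.

Lemma cont_add f g x : contat f x -> contat g x -> contat (fun y => f y + g y) x.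
Proof.
move=> cf cg eps he; have [h1 h2] := Rhalf he.
have [d1 [d1p H1]] := cf _ h1; have [d2 [d2p H2]] := cg _ h1.
exists (Rmin d1 d2); split; first by apply: Rmin_pos.
move=> y hy; have := H1 y (Rlt_le_trans _ _ _ hy (Rmin_l _ _)).
have := H2 y (Rlt_le_trans _ _ _ hy (Rmin_r _ _)).
have -> : f y + g y - (f x + g x) = (f y - f x) + (g y - g x) by ring.
have := @avD _ _ hK (f y - f x) (g y - g x); lra.
Qed.

Lemma cont_opp f x : contat f x -> contat (fun y => - f y) x.
Proof.
move=> cf eps he; have [d [dp H]] := cf _ he; exists d; split => // y hy.
by rewrite -opprD (@avN _ _ hK); apply: H.
Qed.

Lemma cont_mul f g x : contat f x -> contat g x -> contat (fun y => f y * g y) x.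
Proof.
move=> cf cg eps he.
have [e [ep [e1 eH]]] := Rmul_choice (@av_ge0 _ _ hK (f x)) (@av_ge0 _ _ hK (g x)) he.
have [d1 [d1p H1]] := cf _ ep; have [d2 [d2p H2]] := cg _ ep.
exists (Rmin d1 d2); split; first by apply: Rmin_pos.
move=> y hy; have Hf := H1 y (Rlt_le_trans _ _ _ hy (Rmin_l _ _)).
have Hg := H2 y (Rlt_le_trans _ _ _ hy (Rmin_r _ _)).
have -> : f y * g y - f x * g x = f y * (g y - g x) + (f y - f x) * g x by ring.
apply: Rle_lt_trans (@avD _ _ hK _ _) _; rewrite !(@avM _ _ hK).
apply: (Rmul_bound _ _ _ _ _ _ Hf Hg e1 eH); try exact: @av_ge0 _ _ hK _.
have := @avD _ _ hK (f x) (f y - f x); rewrite addrC subrK; lra.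
Qed.

Lemma cont_ext f g x : (forall y, f y = g y) -> contat f x -> contat g x.
Proof.
move=> E cf eps he; have [d [dp H]] := cf _ he; exists d; split => // y hy.
by rewrite -!E; apply: H.
Qed.

Lemma cont_pow f x i : contat f x -> contat (fun y => f y ^+ i) x.
Proof.
move=> cf; elim: i => [|i IH].
  by apply: (@cont_ext (fun _ => 1)) => //; apply: cont_const.
apply: (@cont_ext (fun y => f y * f y ^+ i)); first by move=> y; rewrite exprS.
exact: cont_mul.
Qed.

Lemma cont_sum m (F : 'I_m -> Qp -> K) x : (forall i, contat (F i) x) ->
  contat (fun y => \sum_(i < m) F i y) x.
Proof.
elim: m F => [|m IH] F cF.
  by apply: (@cont_ext (fun _ => 0)) => [y|]; rewrite ?big_ord0 //; apply: cont_const.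
apply: (@cont_ext (fun y => \sum_(i < m) F (widen_ord (leqnSn m) i) y + F ord_max y)).
  by move=> y; rewrite big_ord_recr.
by apply: cont_add => //; apply: (IH (fun i => F (widen_ord (leqnSn m) i))).
Qed.
End Cont.

Theorem theorem6 (p : nat) (hp : prime p)
  (Qp : fieldType) (vp : Qp -> R) (hQp : is_Qp p vp)
  (K : fieldType) (vK : K -> R) (hK : is_absval vK)
  (iota : {rmorphism Qp -> K}) (hiota : av_continuous vp vK iota)
  (f : Qp -> K) (hf : av_continuous vp vK f) (n : nat) :
  (forall x h : Qp, fdiff n.+1 h f x = 0) <->
  (exists a : 'I_n.+1 -> K,
     forall x : Qp, f x = \sum_(i < n.+1) a i * iota x ^+ i).
Proof.
have hvp : is_absval vp by case: hQp.
have chQ : forall k, (k.+1%:R : Qp) != 0.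
  case: hQp => [[_ [H _]] [Hr _]] k; apply/eqP => E.
  have := Hr (k.+1%:R); rewrite ratr_nat E.
  have -> : vp 0 = R0 by apply/H.
  rewrite /padic_abs Num.Theory.pnatr_eq0 /=.
  have Pp : Rlt R0 (INR p) by apply: lt_0_INR; apply/ltP; exact: prime_gt0.
  have := powerRZ_lt (INR p) (Z.opp (Z.sub (Z.of_nat (logn p `|numq (k.+1%:R : rat)|%N))
                  (Z.of_nat (logn p `|denq (k.+1%:R : rat)|%N)))) Pp.
  move=> H1 H2; rewrite -H2 in H1; exact: (Rlt_irrefl _ H1).
have chK : forall k, (k.+1%:R : K) != 0.
  by move=> k; rewrite -(rmorph_nat iota) fmorph_eq0.
have polyE : forall (a : 'I_n.+1 -> K) x h,
    fdiff n.+1 h (fun y => \sum_(i < n.+1) a i * iota y ^+ i) x = 0.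
  move=> a x h; rewrite -[RHS](@fdiff_poly _ _ a (iota x) (iota h)).
  by apply: eq_bigr => k _; rewrite rmorphD rmorphMn.
split.
  move=> D.
  have injx : injective (fun j : 'I_n.+1 => ((j : nat)%:R : K)).
    by move=> i j /(@nat_inj _ chK) /val_inj.
  have [a Ha] := @interp _ _ _ (fun j => f (j : nat)%:R) injx.
  exists a.
  pose g x := f x - \sum_(i < n.+1) a i * iota x ^+ i.
  have Dg : forall x h, fdiff n.+1 h g x = 0.
    by move=> x h; rewrite fdiff_sub D polyE subrr.
  have Zg : forall j, (j < n.+1)%N -> g j%:R = 0.
    move=> j lj; rewrite /g rmorph_nat.
    by have := Ha (Ordinal lj) => /= ->; rewrite subrr.
  have gQ := @zeroQ _ _ chQ chK _ _ Dg Zg.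
  have cg : forall x, @contat _ _ vp vK g x.
    move=> x; apply: (@cont_add _ _ vp vK hK); first exact: hf.
    apply: (@cont_opp _ _ vp vK hK); apply: (@cont_sum _ _ vp vK hK) => i.
    apply: (@cont_mul _ _ vp vK hK); first exact: (@cont_const _ _ vp vK hK).
    by apply: (@cont_pow _ _ vp vK hK); exact: hiota.
  move=> x; apply/eqP; rewrite -subr_eq0; apply/eqP; rewrite -/(g x).
  case: (boolP (g x == 0)) => [/eqP //|nz].
  have pos : Rlt R0 (vK (g x)).
    case: (Rle_lt_or_eq_dec _ _ (@av_ge0 _ _ hK (g x))) => // E.
    by case: hK => _ [H _]; move: nz; rewrite (H (g x)).1 ?eqxx.
  have [d [dp Hd]] := cg x _ pos.
  case: hQp => _ [_ [Hdense _]].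
  have [q Hq] := Hdense x d dp.
  have := Hd (ratr q); rewrite gQ sub0r (@avN _ _ hK) -opprB (@avN _ _ hvp) => /(_ Hq).
  by move=> H; case: (Rlt_irrefl _ H).
move=> [a Ha] x h.
rewrite (@fdiff_ext _ _ _ _ _ (fun y => \sum_(i < n.+1) a i * iota y ^+ i) _ Ha).
exact: polyE.
Qed.
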